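(* For any $d\geq 4$, there is no maximally $\psi$-epistemic ontological model that reproduces the quantum predictions for a quantum system with Hilbert space $\mathbb{C}^d$.
   Context: An ontological model for a quantum system with Hilbert space $\mathbb{C}^d$ consists of: a measure space $\Lambda$ of ''ontic states'' (with measure $\mathrm{d}\lambda$); for every pure state $\ket{\psi}$, a probability density $\mu_\psi$ on $\Lambda$; and for every projective measurement $M$ with outcomes $f$ (corresponding to orthogonal projectors $P_f$ summing to the identity), response functions $\xi_M(f|\lambda)\geq 0$ with $\sum_f \xi_M(f|\lambda)=1$ for all $\lambda$. The model reproduces the quantum predictions if $\int_\Lambda \xi_M(f|\lambda)\mu_\psi(\lambda)\,\mathrm{d}\lambda = \bra{\psi}P_f\ket{\psi}$ for all pure states $\ket{\psi}$, all projective measurements $M$ and outcomes $f$. The classical overlap of densities $p,q$ is $\omega_C(p,q)=\int\min\{p(x),q(x)\}\,\mathrm{d}x$; the quantum overlap of pure states is $\omega_Q(\psi,\phi)=1-\sqrt{1-|\braket{\psi|\phi}|^2}$. The model is maximally $\psi$-epistemic if $\omega_C(\mu_\psi,\mu_\phi)=\omega_Q(\psi,\phi)$ for all pairs of pure states $\ket{\psi},\ket{\phi}$. *)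

(* Defs.v *)
From HB Require Import structures.
From mathcomp Require Import all_boot all_order all_algebra.
From mathcomp Require Import all_classical all_reals all_analysis.
From mathcomp Require Import complex.
Set Implicit Arguments. Unset Strict Implicit. Unset Printing Implicit Defensive.
Import Order.TTheory GRing.Theory Num.Theory.
Local Open Scope ring_scope.
Local Open Scope classical_set_scope.

Definition inner (R : realType) (n : nat) (u v : 'cV[complex R]_n) : complex R :=
  \sum_(i < n) (u i 0)^* * v i 0.

Definition adjmx (R : realType) (n : nat) (A : 'M[complex R]_n) : 'M[complex R]_n :=
  (map_mx Num.conj A)^T.

Definition pure_state (R : realType) (n : nat) (psi : 'cV[complex R]_n) : Prop :=
  inner psi psi = 1.

Record meas (R : realType) (n : nat) := Meas {
  meas_k : nat;
  meas_P : 'I_meas_k -> 'M[complex R]_n }.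
Arguments meas_k {R n} m.
Arguments meas_P {R n} m f.

Definition is_projective_meas (R : realType) (n : nat) (M : meas R n) : Prop :=
  (forall f, adjmx (meas_P M f) = meas_P M f) /\
  (forall f, meas_P M f *m meas_P M f = meas_P M f) /\
  (forall f, meas_P M f != 0) /\
  (forall f g, f != g -> meas_P M f *m meas_P M g = 0) /\
  (\sum_f meas_P M f = 1%:M).

Local Open Scope ereal_scope.

(* Ontological model data: a measure space (Lam, mu), densities mu_psi
   (one for every pure state psi), and response functions xi_M(f|lambda)
   (for every projective measurement M and outcome f). *)
Definition ontological_model (R : realType) (n : nat)
  (dsp : measure_display) (Lam : measurableType dsp)
  (mu : {measure set Lam -> \bar R})
  (dens : 'cV[complex R]_n -> Lam -> R)
  (xi : forall M : meas R n, 'I_(meas_k M) -> Lam -> R) : Prop :=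
  (forall psi, pure_state psi ->
     measurable_fun setT (dens psi) /\
     (forall l, (0 <= dens psi l)%R) /\
     \int[mu]_l (dens psi l)%:E = 1) /\
  (forall M, is_projective_meas M ->
     (forall f, measurable_fun setT (xi M f)) /\
     (forall f l, (0 <= xi M f l)%R) /\
     (forall l, (\sum_f xi M f l)%R = 1%R)).

Definition reproduces_qm (R : realType) (n : nat)
  (dsp : measure_display) (Lam : measurableType dsp)
  (mu : {measure set Lam -> \bar R})
  (dens : 'cV[complex R]_n -> Lam -> R)
  (xi : forall M : meas R n, 'I_(meas_k M) -> Lam -> R) : Prop :=
  forall psi M, pure_state psi -> is_projective_meas M ->
    forall f, \int[mu]_l (xi M f l * dens psi l)%:E
              = (complex.Re (inner psi (meas_P M f *m psi)))%:E.

Definition omega_C (R : realType) (dsp : measure_display) (Lam : measurableType dsp)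
  (mu : {measure set Lam -> \bar R}) (p q : Lam -> R) : \bar R :=
  \int[mu]_l (Num.min (p l) (q l))%:E.

Definition omega_Q (R : realType) (n : nat) (psi phi : 'cV[complex R]_n) : R :=
  (1 - Num.sqrt (1 - (ComplexField.Normc.normc (inner psi phi)) ^+ 2))%R.

Definition max_psi_epistemic (R : realType) (n : nat)
  (dsp : measure_display) (Lam : measurableType dsp)
  (mu : {measure set Lam -> \bar R})
  (dens : 'cV[complex R]_n -> Lam -> R) : Prop :=
  forall psi phi, pure_state psi -> pure_state phi ->
    omega_C mu (dens psi) (dens phi) = (omega_Q psi phi)%:E.

(* Main.v *)
Require Import Defs.
From HB Require Import structures.
From mathcomp Require Import all_boot all_order all_algebra.
From mathcomp Require Import all_classical all_reals all_analysis.
From mathcomp Require Import complex.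
From mathcomp Require Import ring lra.
Set Implicit Arguments. Unset Strict Implicit. Unset Printing Implicit Defensive.
Import Order.TTheory GRing.Theory Num.Theory.
Local Open Scope ring_scope.
Local Open Scope classical_set_scope.

Section Alg.
Variables (R : realType) (n : nat).
Hypothesis hn : (4 <= n)%N.
Local Notation C := (complex R).

Definition vec4 (l : seq C) : 'cV[C]_n := \col_(i < n) nth 0 l i.
Definition proj2 (u : 'cV[C]_n) : 'M[C]_n :=
  \matrix_(i, j) (2^-1 * (u i 0 * (u j 0)^*)).

Lemma sum_first4 (F : nat -> C) : (forall i, (4 <= i)%N -> F i = 0) ->
  \sum_(i < n) F i = F 0%N + F 1%N + F 2%N + F 3%N.
Proof.
move=> F0; rewrite -(big_mkord xpredT F) (big_cat_nat (leq0n 4) hn) /=.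
rewrite [X in _ + X]big1_seq ?addr0; last first.
  by move=> i /andP[_]; rewrite mem_index_iota => /andP[h _]; exact: F0 h.
by rewrite !big_nat_recl // big_geq // addr0 !addrA.
Qed.

Lemma inner_vec4 a0 a1 a2 a3 b0 b1 b2 b3 :
  inner (vec4 [:: a0; a1; a2; a3]) (vec4 [:: b0; b1; b2; b3]) =
  a0^* * b0 + a1^* * b1 + a2^* * b2 + a3^* * b3.
Proof.
rewrite /inner (eq_bigr (fun i : 'I_n => (nth 0 [:: a0; a1; a2; a3] i)^* * nth 0 [:: b0; b1; b2; b3] i)); last by move=> i _; rewrite !mxE.
rewrite (@sum_first4 (fun i => (nth 0 [:: a0; a1; a2; a3] i)^* * nth 0 [:: b0; b1; b2; b3] i)) //.
by move=> [|[|[|[|i]]]] //= _; rewrite nth_nil mulr0.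
Qed.


Lemma innerC (u v : 'cV[C]_n) : inner v u = (inner u v)^*.
Proof.
rewrite /inner rmorph_sum; apply: eq_bigr => i _.
by rewrite rmorphM /= conjCK mulrC.
Qed.

Lemma innerDr (u v w : 'cV[C]_n) : inner u (v + w) = inner u v + inner u w.
Proof. by rewrite /inner -big_split; apply: eq_bigr => i _; rewrite mxE mulrDr. Qed.

Lemma innerNr (u v : 'cV[C]_n) : inner u (- v) = - inner u v.
Proof. by rewrite /inner -sumrN; apply: eq_bigr => i _; rewrite mxE mulrN. Qed.

Lemma innerZr (u v : 'cV[C]_n) c : inner u (c *: v) = c * inner u v.
Proof. by rewrite /inner mulr_sumr; apply: eq_bigr => i _; rewrite mxE mulrCA. Qed.

Lemma mul_proj2 (u v : 'cV[C]_n) : proj2 u *m v = (2^-1 * inner u v) *: u.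
Proof.
apply/matrixP => i j; rewrite (ord1 j) !mxE /inner mulr_sumr mulr_suml.
apply: eq_bigr => l _; rewrite !mxE; ring.
Qed.

Lemma proj2_mul (u w : 'cV[C]_n) :
  proj2 u *m proj2 w =
  (2^-1 * inner u w) *: \matrix_(i, j) (2^-1 * (u i 0 * (w j 0)^*)).
Proof.
apply/matrixP => i j; rewrite !mxE /inner mulr_sumr mulr_suml.
apply: eq_bigr => l _; rewrite !mxE; ring.
Qed.

Lemma proj2_idem (u : 'cV[C]_n) : inner u u = 2 -> proj2 u *m proj2 u = proj2 u.
Proof.
move=> h; rewrite proj2_mul h mulVf ?pnatr_eq0 // scale1r.
by apply/matrixP => i j; rewrite !mxE.
Qed.

Lemma proj2_orth (u w : 'cV[C]_n) : inner u w = 0 -> proj2 u *m proj2 w = 0.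
Proof. by move=> h; rewrite proj2_mul h mulr0 scale0r. Qed.

Lemma conj_half : (2^-1 : C)^* = 2^-1.
Proof. by rewrite fmorphV rmorph_nat. Qed.

Lemma adj_proj2 (u : 'cV[C]_n) : adjmx (proj2 u) = proj2 u.
Proof.
apply/matrixP => i j; rewrite /adjmx !mxE !rmorphM /= conj_half conjCK; ring.
Qed.

Lemma adjmxD (A B : 'M[C]_n) : adjmx (A + B) = adjmx A + adjmx B.
Proof. by apply/matrixP => i j; rewrite /adjmx !mxE rmorphD. Qed.

Lemma adjmxN (A : 'M[C]_n) : adjmx (- A) = - adjmx A.
Proof. by apply/matrixP => i j; rewrite /adjmx !mxE rmorphN. Qed.

Lemma adjmx1 : adjmx (1%:M : 'M[C]_n) = 1%:M.
Proof.
apply/matrixP => i j; rewrite /adjmx !mxE /= rmorphMn /= rmorph1 eq_sym //.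
Qed.


Definition P3 (u w : 'cV[C]_n) (f : 'I_3) : 'M[C]_n :=
  match nat_of_ord f with
  | 0 => proj2 u | 1 => proj2 w | _ => 1%:M - proj2 u - proj2 w end.

Definition meas3 (u w : 'cV[C]_n) : meas R n := @Meas R n 3 (P3 u w).

Lemma inner_proj2 (u v : 'cV[C]_n) :
  inner v (proj2 u *m v) = 2^-1 * inner u v * inner v u.
Proof. by rewrite mul_proj2 innerZr. Qed.

Lemma inner_P3_2 (u w v : 'cV[C]_n) (f : 'I_3) : nat_of_ord f = 2%N ->
  inner v (P3 u w f *m v) =
  inner v v - 2^-1 * inner u v * inner v u - 2^-1 * inner w v * inner v w.
Proof.
rewrite /P3 => ->.
by rewrite !mulmxBl mul1mx !innerDr !innerNr !inner_proj2.
Qed.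

Lemma nz_of_inner (P : 'M[C]_n) (z : 'cV[C]_n) : z != 0 -> P *m z = z -> P != 0.
Proof. by move=> hz hP; apply/eqP => P0; move: hP; rewrite P0 mul0mx => /esym/eqP; rewrite (negbTE hz). Qed.

Lemma meas3_proj (u w z : 'cV[C]_n) :
  inner u u = 2 -> inner w w = 2 -> inner u w = 0 ->
  inner u z = 0 -> inner w z = 0 -> z != 0 ->
  is_projective_meas (meas3 u w).
Proof.
move=> huu hww huw huz hwz hz.
have hwu : inner w u = 0 by rewrite innerC huw rmorph0.
have hu0 : u != 0 by apply/eqP => u0; move: huu; rewrite u0 /inner big1 => [/eqP|i _]; rewrite ?mxE ?mulr0 // eq_sym pnatr_eq0.
have hw0 : w != 0 by apply/eqP => u0; move: hww; rewrite u0 /inner big1 => [/eqP|i _]; rewrite ?mxE ?mulr0 // eq_sym pnatr_eq0.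
have Pu := proj2_idem huu; have Pw := proj2_idem hww.
have Puw := proj2_orth huw; have Pwu := proj2_orth hwu.
have E2 : (1%:M - proj2 u - proj2 w) *m (1%:M - proj2 u - proj2 w) = 1%:M - proj2 u - proj2 w.
  rewrite !mulmxBl !mulmxBr !mul1mx !mulmx1 Pu Pw Puw Pwu.
  by rewrite !subr0 !subrr !subr0.
have Eu : proj2 u *m (1%:M - proj2 u - proj2 w) = 0.
  by rewrite !mulmxBr mulmx1 Pu Puw subrr subr0.
have Ew : proj2 w *m (1%:M - proj2 u - proj2 w) = 0.
  by rewrite !mulmxBr mulmx1 Pw Pwu subr0 subrr.
have Eu' : (1%:M - proj2 u - proj2 w) *m proj2 u = 0.
  by rewrite !mulmxBl mul1mx Pu Pwu subrr subr0.
have Ew' : (1%:M - proj2 u - proj2 w) *m proj2 w = 0.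
  by rewrite !mulmxBl mul1mx Pw Puw subr0 subrr.
split; last split; last split; last split.
- by case=> -[|[|[|//]]] ? /=; rewrite /P3 /= ?adjmxD ?adjmxN ?adjmx1 ?adj_proj2.
- by case=> -[|[|[|//]]] ? /=; rewrite /P3 /=.
- case=> -[|[|[|//]]] ? /=; rewrite /P3 /=.
  + apply: (nz_of_inner hu0); rewrite mul_proj2 huu mulVf ?pnatr_eq0 // scale1r //.
  + apply: (nz_of_inner hw0); rewrite mul_proj2 hww mulVf ?pnatr_eq0 // scale1r //.
  + apply: (nz_of_inner hz); rewrite !mulmxBl mul1mx !mul_proj2 huz hwz mulr0 !scale0r !subr0 //.
- by case=> -[|[|[|//]]] ? [] -[|[|[|//]]] ? //=; rewrite /P3 /=.
- rewrite /= !big_ord_recl big_ord0 /P3 /= addr0 -[1%:M - _ - _]addrA -opprD addrA.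
  by rewrite addrC subrK.
Qed.


Definition sg (b : bool) : C := if b then 1 else -1.
Definition psi0 : 'cV[C]_n := vec4 [:: 1; 0; 0; 0].
Definition phi (s : bool * bool * bool) : 'cV[C]_n :=
  vec4 [:: 2^-1; sg s.1.1 / 2; sg s.1.2 / 2; sg s.2 / 2].

Lemma conj_sg b : (sg b)^* = sg b.
Proof. by case: b; rewrite /sg ?rmorphN /= rmorph1. Qed.

Lemma two_neq0 : (2 : C) != 0. Proof. by rewrite pnatr_eq0. Qed.

Ltac cmp := rewrite inner_vec4 /= ?rmorphM /= ?rmorphN /= ?rmorph1 ?rmorph0 ?conj_half ?conj_sg.

Lemma pure_psi0 : pure_state psi0.
Proof. rewrite /pure_state /psi0; cmp; ring. Qed.

Lemma pure_phi s : pure_state (phi s).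
Proof.
case: s => [[a b] c]; rewrite /pure_state /phi; cmp.
by case: a; case: b; case: c; rewrite /sg; field.
Qed.

Lemma inner_psi_phi s : inner psi0 (phi s) = 2^-1.
Proof. case: s => [[a b] c]; rewrite /psi0 /phi; cmp; ring. Qed.

Definition u1 : 'cV[C]_n := vec4 [:: 1; 1; 0; 0].
Definition w1 : 'cV[C]_n := vec4 [:: 1; -1; 0; 0].
Definition z1 : 'cV[C]_n := vec4 [:: 0; 0; 1; 0].
Definition u2 : 'cV[C]_n := vec4 [:: 1; 0; 1; 0].
Definition w2 : 'cV[C]_n := vec4 [:: 1; 0; -1; 0].
Definition z2 : 'cV[C]_n := vec4 [:: 0; 1; 0; 0].
Definition u3 : 'cV[C]_n := vec4 [:: 1; 0; 0; 1].
Definition w3 : 'cV[C]_n := vec4 [:: 1; 0; 0; -1].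
Definition z3 : 'cV[C]_n := vec4 [:: 0; 1; 0; 0].

Lemma vec4_neq0 (l : seq C) (i : nat) : (i < 4)%N -> nth 0 l i != 0 -> vec4 l != 0.
Proof.
move=> hi hl; apply/eqP => h.
have hin : (i < n)%N by apply: leq_trans hn.
have := congr1 (fun M : 'cV[C]_n => M (Ordinal hin) 0) h; rewrite !mxE /=.
by move/eqP: hl.
Qed.

Lemma oneC_neq0 : (1 : C) != 0. Proof. exact: oner_neq0. Qed.

Lemma meas1_proj : is_projective_meas (meas3 u1 w1).
Proof.
apply: (@meas3_proj _ _ z1); rewrite /u1 /w1 /z1; try (cmp; ring).
by apply: (@vec4_neq0 _ 2) => //; rewrite oner_neq0.
Qed.
Lemma meas2_proj : is_projective_meas (meas3 u2 w2).
Proof.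
apply: (@meas3_proj _ _ z2); rewrite /u2 /w2 /z2; try (cmp; ring).
by apply: (@vec4_neq0 _ 1) => //; rewrite oner_neq0.
Qed.
Lemma meas3_proj' : is_projective_meas (meas3 u3 w3).
Proof.
apply: (@meas3_proj _ _ z3); rewrite /u3 /w3 /z3; try (cmp; ring).
by apply: (@vec4_neq0 _ 1) => //; rewrite oner_neq0.
Qed.

Lemma born_u1 s : s.1.1 = false -> inner u1 (phi s) = 0.
Proof. by case: s => [[a b] c] /= ->; rewrite /u1 /phi; cmp; rewrite /sg; field. Qed.
Lemma born_w1 s : s.1.1 = true -> inner w1 (phi s) = 0.
Proof. by case: s => [[a b] c] /= ->; rewrite /w1 /phi; cmp; rewrite /sg; field. Qed.
Lemma born_u2 s : s.1.2 = false -> inner u2 (phi s) = 0.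
Proof. by case: s => [[a b] c] /= ->; rewrite /u2 /phi; cmp; rewrite /sg; field. Qed.
Lemma born_w2 s : s.1.2 = true -> inner w2 (phi s) = 0.
Proof. by case: s => [[a b] c] /= ->; rewrite /w2 /phi; cmp; rewrite /sg; field. Qed.
Lemma born_u3 s : s.2 = false -> inner u3 (phi s) = 0.
Proof. by case: s => [[a b] c] /= ->; rewrite /u3 /phi; cmp; rewrite /sg; field. Qed.
Lemma born_w3 s : s.2 = true -> inner w3 (phi s) = 0.
Proof. by case: s => [[a b] c] /= ->; rewrite /w3 /phi; cmp; rewrite /sg; field. Qed.

Lemma psi_u1 : inner u1 psi0 = 1 /\ inner w1 psi0 = 1.
Proof. by rewrite /u1 /w1 /psi0; split; cmp; ring. Qed.
Lemma psi_u2 : inner u2 psi0 = 1 /\ inner w2 psi0 = 1.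
Proof. by rewrite /u2 /w2 /psi0; split; cmp; ring. Qed.
Lemma psi_u3 : inner u3 psi0 = 1 /\ inner w3 psi0 = 1.
Proof. by rewrite /u3 /w3 /psi0; split; cmp; ring. Qed.

End Alg.
Arguments psi0 {R n}. Arguments phi {R n}.
Arguments u1 {R n}. Arguments w1 {R n}. Arguments u2 {R n}. Arguments w2 {R n}. Arguments u3 {R n}. Arguments w3 {R n}.

Section Meas.
Variables (R : realType) (n : nat) (dsp : measure_display) (Lam : measurableType dsp)
  (mu : {measure set Lam -> \bar R}) (dens : 'cV[complex R]_n -> Lam -> R)
  (xi : forall M : meas R n, 'I_(meas_k M) -> Lam -> R).
Hypotheses (Hm : ontological_model mu dens xi) (Hr : reproduces_qm mu dens xi).
Local Open Scope ereal_scope.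

Lemma antidist (M : meas R n) (hM : is_projective_meas M) (g : Lam -> R) :
  measurable_fun setT g -> (forall l, 0 <= g l)%R ->
  (forall f, exists x, pure_state x /\ inner x (meas_P M f *m x) = 0%R /\
     forall l, (g l <= dens x l)%R) ->
  \int[mu]_l (g l)%:E = 0.
Proof.
move=> mg g0 H.
have [mxi [xi0 xi1]] := Hm.2 M hM.
have -> : \int[mu]_l (g l)%:E = \int[mu]_l (\sum_(f < meas_k M) (xi f l * g l)%:E).
  by apply: eq_integral => l _; rewrite sumEFin -mulr_suml xi1 mul1r.
rewrite ge0_integral_sum //; first last.
- by move=> f l _; rewrite lee_fin mulr_ge0.
- by move=> f; apply/measurable_realfun.measurable_EFinP; exact: measurable_realfun.measurable_funM.
apply: big1 => f _.
have [x [px [hx gx]]] := H f.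
have [mdx [dx0 _]] := Hm.1 x px.
apply/eqP; rewrite eq_le integral_ge0 ?andbT; last by move=> l _; rewrite lee_fin mulr_ge0.
have <- : (complex.Re (inner x (meas_P M f *m x)))%:E = 0 by rewrite hx.
rewrite -Hr //.
apply: ge0_le_integral => //.
- by move=> l _; rewrite lee_fin mulr_ge0.
- by apply/measurable_realfun.measurable_EFinP; exact: measurable_realfun.measurable_funM.
- by apply/measurable_realfun.measurable_EFinP; exact: measurable_realfun.measurable_funM.
- by move=> l _; rewrite lee_fin ler_wpM2l.
Qed.

End Meas.

Section Final.
Variables (R : realType) (n : nat) (dsp : measure_display) (Lam : measurableType dsp)
  (mu : {measure set Lam -> \bar R}) (dens : 'cV[complex R]_n -> Lam -> R)
  (xi : forall M : meas R n, 'I_(meas_k M) -> Lam -> R).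
Hypothesis hn : (4 <= n)%N.
Hypotheses (Hm : ontological_model mu dens xi) (Hr : reproduces_qm mu dens xi).
Local Notation C := (complex R).

Lemma triple (u w : 'cV[C]_n) (x0 x1 : 'cV[C]_n) (g : Lam -> R) :
  is_projective_meas (meas3 u w) ->
  pure_state x0 -> pure_state x1 ->
  inner u x0 = 0 -> inner w x1 = 0 -> inner u psi0 = 1 -> inner w psi0 = 1 ->
  measurable_fun setT g -> (forall l, 0 <= g l) ->
  (forall l, g l <= dens x0 l) -> (forall l, g l <= dens x1 l) ->
  (forall l, g l <= dens psi0 l) ->
  (\int[mu]_l (g l)%:E = 0)%E.
Proof.
move=> hM p0 p1 h0 h1 hu hw mg g0 g1 g2 g3.
apply: (antidist Hm Hr hM) => // -[[|[|[|//]]] hf].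
- exists x0; split=> //; split=> //=; rewrite /P3 /= inner_proj2 h0; ring.
- exists x1; split=> //; split=> //=; rewrite /P3 /= inner_proj2 h1; ring.
- exists psi0; split; first exact: (pure_psi0 _ hn).
  split=> //=; rewrite inner_P3_2 // (innerC u) (innerC w) hu hw rmorph1.
  have := @pure_psi0 R n hn; rewrite /pure_state => ->; by field.
Qed.


Lemma pair_gen (s t : bool * bool * bool) (g : Lam -> R) :
  s != t -> measurable_fun setT g -> (forall l, 0 <= g l) ->
  (forall l, g l <= dens psi0 l) -> (forall l, g l <= dens (phi s) l) ->
  (forall l, g l <= dens (phi t) l) ->
  (\int[mu]_l (g l)%:E = 0)%E.
Proof.
move=> hst mg g0 gp gs gt.
have P := pure_phi R hn.
case: s t hst gs gt => [[a b] c] [[a' b'] c'] hst gs gt.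
case ha: (a == a').
  case hb: (b == b').
    case hc: (c == c').
      by move: hst; rewrite (eqP ha) (eqP hb) (eqP hc) eqxx.
    clear hst; move: hc gs gt; case: c; case: c' => // _ gs gt;
    first [ by apply: (triple (u:=u3) (w:=w3) (x0:=phi (a, b, false)) (x1:=phi (a', b', true))) => //;
        try exact: (meas3_proj' _ hn); try (by case: (psi_u3 R hn)); by rewrite ?born_u3 ?born_w3
    | by apply: (triple (u:=u3) (w:=w3) (x0:=phi (a', b', false)) (x1:=phi (a, b, true))) => //;
        try exact: (meas3_proj' _ hn); try (by case: (psi_u3 R hn)); by rewrite ?born_u3 ?born_w3 ].
  clear hst; move: hb gs gt; case: b; case: b' => // _ gs gt;
  first [ by apply: (triple (u:=u2) (w:=w2) (x0:=phi (a, false, c)) (x1:=phi (a', true, c'))) => //;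
      try exact: (meas2_proj _ hn); try (by case: (psi_u2 R hn)); by rewrite ?born_u2 ?born_w2
  | by apply: (triple (u:=u2) (w:=w2) (x0:=phi (a', false, c')) (x1:=phi (a, true, c))) => //;
      try exact: (meas2_proj _ hn); try (by case: (psi_u2 R hn)); by rewrite ?born_u2 ?born_w2 ].
clear hst; move: ha gs gt; case: a; case: a' => // _ gs gt;
first [ by apply: (triple (u:=u1) (w:=w1) (x0:=phi (false, b, c)) (x1:=phi (true, b', c'))) => //;
    try exact: (meas1_proj _ hn); try (by case: (psi_u1 R hn)); by rewrite ?born_u1 ?born_w1
| by apply: (triple (u:=u1) (w:=w1) (x0:=phi (false, b', c')) (x1:=phi (true, b, c))) => //;
    try exact: (meas1_proj _ hn); try (by case: (psi_u1 R hn)); by rewrite ?born_u1 ?born_w1 ].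
Qed.

End Final.

Lemma exmax (R : realType) (S : finType) (i0 : S) (c : S -> R) : exists j, forall i, c i <= c j.
Proof.
case: (@arg_maxP _ _ _ i0 xpredT c erefl) => j _ H; exists j => i; exact: H.
Qed.

Lemma bonf (R : realType) (S : finType) (i0 : S) (a : R) (c : S -> R) :
  (forall s, 0 <= c s) -> (forall s, c s <= a) ->
  \sum_s c s <= a + \sum_s \sum_t (if t == s then 0 else Num.min (c s) (c t)).
Proof.
move=> c0 ca.
have [j hj] := exmax i0 c.
have H0 : forall s t, 0 <= (if t == s then 0 else Num.min (c s) (c t)).
  by move=> s t; case: (t == s) => //; rewrite le_min !c0.
rewrite (bigD1 j) //= [X in _ <= _ + X](bigD1 j) //= addrA.
apply: lerD; first by apply: (le_trans (ca j)); rewrite lerDl sumr_ge0.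
apply: ler_sum => s hs.
rewrite (bigD1 j) //=.
have -> : (j == s) = false by rewrite eq_sym (negbTE hs).
by rewrite (min_l (hj s)) lerDl sumr_ge0.
Qed.

Lemma normc_half (R : realType) : ComplexField.Normc.normc (2^-1 : complex R) = 2^-1.
Proof.
have -> : (2^-1 : complex R) = (2^-1 : R)%:C%C by rewrite fmorphV rmorph_nat.
rewrite /ComplexField.Normc.normc /= expr0n /= addr0 sqrtr_sqr ger0_norm //.
Qed.

Lemma omega_val (R : realType) : (1 - Num.sqrt (1 - (2^-1 : R) ^+ 2)) *+ 8 > 1.
Proof.
have h : Num.sqrt (1 - (2^-1 : R) ^+ 2) < 7 / 8.
  rewrite -[X in _ < X]ger0_norm // -sqrtr_sqr ltr_sqrt; last by rewrite exprn_gt0.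
  lra.
lra.
Qed.

Section Fin.
Variables (R : realType) (n : nat) (dsp : measure_display) (Lam : measurableType dsp)
  (mu : {measure set Lam -> \bar R}) (dens : 'cV[complex R]_n -> Lam -> R)
  (xi : forall M : meas R n, 'I_(meas_k M) -> Lam -> R).
Hypothesis hn : (4 <= n)%N.
Hypotheses (Hm : ontological_model mu dens xi) (Hr : reproduces_qm mu dens xi)
  (Hmax : max_psi_epistemic mu dens).

Let S := (bool * bool * bool)%type.
Let c (s : S) l := Num.min (dens psi0 l) (dens (phi s) l).
Let H (s t : S) l := if t == s then 0 else Num.min (c s l) (c t l).

Lemma final : False.
Proof.
have pd x : pure_state x -> [/\ measurable_fun setT (dens x), (forall l, 0 <= dens x l) &
   (\int[mu]_l (dens x l)%:E = 1)%E].
  by move=> px; have [? [? ?]] := Hm.1 x px; split.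
have [mp p0 p1] := pd _ (pure_psi0 R hn).
have mc s : measurable_fun setT (c s).
  have [ms _ _] := pd _ (pure_phi R hn s); exact: measurable_realfun.measurable_minr.
have c0 s l : 0 <= c s l.
  have [_ s0 _] := pd _ (pure_phi R hn s); by rewrite le_min p0 s0.
have cp s l : c s l <= dens psi0 l by rewrite /c ge_min lexx.
have mH s t : measurable_fun setT (H s t).
  rewrite /H; case: (t == s); first exact: measurable_cst.
  exact: measurable_realfun.measurable_minr.
have H0 s t l : 0 <= H s t l by rewrite /H; case: (t == s) => //; rewrite le_min !c0.
have HZ s t : (\int[mu]_l (H s t l)%:E = 0)%E.
  rewrite /H; case: eqP => [_|hts].
    by rewrite integral0.
  apply: (pair_gen hn Hm Hr (s:=s) (t:=t)).
  - by apply/eqP => hh; apply: hts.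
  - exact: measurable_realfun.measurable_minr.
  - by move=> l; rewrite le_min !c0.
  - by move=> l; rewrite ge_min cp.
  - by move=> l; rewrite ge_min /c ge_min lexx orbT.
  - by move=> l; rewrite ge_min orbC /c ge_min lexx orbT.
set w0 := 1 - Num.sqrt (1 - (2^-1 : R) ^+ 2).
have hw s : (\int[mu]_l (c s l)%:E = w0%:E)%E.
  have := Hmax (pure_psi0 R hn) (pure_phi R hn s).
  by rewrite /omega_C /omega_Q inner_psi_phi // normc_half.
have : ((w0 *+ 8)%:E <= 1)%E.
  have -> : 8%N = #|{: S}| by rewrite /S !card_prod !card_bool.
  rewrite -sumr_const -sumEFin.
  rewrite (eq_bigr (fun s => \int[mu]_l (c s l)%:E)%E); last by move=> s _; rewrite hw.
  rewrite -ge0_integral_sum //; last first.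
  - by move=> s l _; rewrite lee_fin.
  - by move=> s; apply/measurable_realfun.measurable_EFinP.
  have E2 : (\int[mu]_l (\sum_s (c s l)%:E) <=
       \int[mu]_l ((dens psi0 l)%:E + (\sum_s \sum_t (H s t l)%:E)))%E.
    apply: ge0_le_integral => //.
    - by move=> l _; rewrite sumEFin lee_fin sumr_ge0.
    - by apply: emeasurable_sum => s; apply/measurable_realfun.measurable_EFinP.
    - apply: emeasurable_funD; first by apply/measurable_realfun.measurable_EFinP.
      by apply: emeasurable_sum => s; apply: emeasurable_sum => t; apply/measurable_realfun.measurable_EFinP.
    - move=> l _; rewrite sumEFin.
      rewrite (eq_bigr (fun s => (\sum_t H s t l)%:E)%E); last by move=> s _; rewrite sumEFin.
      by rewrite sumEFin -EFinD lee_fin (bonf (true, true, true)).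
  apply: (le_trans E2).
  rewrite ge0_integralD //; first last.
  - by apply: emeasurable_sum => s; apply: emeasurable_sum => t; apply/measurable_realfun.measurable_EFinP.
  - move=> l _; apply: sume_ge0 => s _; apply: sume_ge0 => t _; by rewrite lee_fin.
  - by apply/measurable_realfun.measurable_EFinP.
  - by move=> l _; rewrite lee_fin.
  rewrite p1 ge0_integral_sum //; first last.
  - by move=> s l _; apply: sume_ge0 => t _; rewrite lee_fin.
  - by move=> s; apply: emeasurable_sum => t; apply/measurable_realfun.measurable_EFinP.
  rewrite big1 ?adde0 // => s _.
  rewrite ge0_integral_sum //; first last.
  - by move=> t l _; rewrite lee_fin.
  - by move=> t; apply/measurable_realfun.measurable_EFinP.
  by rewrite big1.
have := omega_val R; rewrite -/w0 lee_fin => h1 h2.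
by have := lt_le_trans h1 h2; rewrite ltxx.
Qed.

End Fin.

Theorem corollary1 (R : realType) (n : nat) (hn : (4 <= n)%N)
  (dsp : measure_display) (Lam : measurableType dsp)
  (mu : {measure set Lam -> \bar R})
  (dens : 'cV[complex R]_n -> Lam -> R)
  (xi : forall M : meas R n, 'I_(meas_k M) -> Lam -> R) :
  ~ (ontological_model mu dens xi /\ reproduces_qm mu dens xi /\
     max_psi_epistemic mu dens).
Proof.
move=> [Hm [Hr Hmax]].
exact: (final hn Hm Hr Hmax).
Qed.
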